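(* Let $p$ be a prime and let $\Gamma$ be a finite connected $G$-arc-transitive graph of prime valency $p$, with $G\leqslant\mathrm{Aut}(\Gamma)$ acting quasiprimitively or biquasiprimitively on $\mathrm V(\Gamma)$. Suppose that either (a) $\Gamma=\mathrm K_{12}$, $G=\mathrm M_{11}$ and $p=11$; or (b) $|\mathrm V(\Gamma)|=(p^2-1)/2s$ and $G=\mathrm{PSL}_2(p)$ or $\mathrm{PGL}_2(p)$, where $p$ is a Mersenne prime and $\mathrm C_r\leqslant \mathrm C_s<\mathrm C_{(p-1)/2}$, with $r$ the product of the distinct prime divisors of $(p-1)/2$. Then $\Gamma$ contains a triangle.
   Context: A graph is $G$-arc-transitive if $G$ acts transitively on its arcs. A permutation group is quasiprimitive if every nontrivial normal subgroup is transitive, and biquasiprimitive if it is not quasiprimitive and every nontrivial normal subgroup has at most two orbits. $\mathrm C_n$ denotes the cyclic group of order $n$. A triangle is a set of three pairwise adjacent vertices. *)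

(* Defs.v *)
From mathcomp Require Import all_boot all_order all_algebra all_fingroup all_solvable.
Set Implicit Arguments. Unset Strict Implicit. Unset Printing Implicit Defensive.
Import GRing.Theory.

Local Open Scope group_scope.

(* A finite simple graph: vertex type T : finType, symmetric irreflexive e. *)

Definition is_aut_group (T : finType) (e : rel T) (G : {set {perm T}}) :=
  forall g, g \in G -> forall x y, e (g x) (g y) = e x y.

Definition connected_graph (T : finType) (e : rel T) :=
  forall x y : T, connect e x y.

Definition regular_of_valency (T : finType) (e : rel T) (k : nat) :=
  forall x : T, #|[set y | e x y]| = k.

Definition arc_transitive (T : finType) (e : rel T) (G : {set {perm T}}) :=
  forall x y x' y', e x y -> e x' y' ->
    exists2 g, g \in G & g x = x' /\ g y = y'.

Definition quasiprimitive (T : finType) (G : {group {perm T}}) :=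
  forall N : {group {perm T}}, N <| G -> N :!=: 1 ->
    [transitive N, on [set: T] | 'P].

Definition norbits (T : finType) (N : {set {perm T}}) :=
  #|[set orbit 'P N x | x : T]|.

Definition biquasiprimitive (T : finType) (G : {group {perm T}}) :=
  ~ quasiprimitive G /\
  forall N : {group {perm T}}, N <| G -> N :!=: 1 -> norbits N <= 2.

Definition has_triangle (T : finType) (e : rel T) :=
  exists x y z : T, [&& e x y, e y z & e x z].

Definition is_complete_graph (T : finType) (e : rel T) (n : nat) :=
  #|T| = n /\ forall x y : T, x != y -> e x y.

(* Mathieu group M11 = < (1 2 ... 11), (3 7 11 8)(4 10 5 6) > on 11 points
   (points 1..11 are encoded as 0..10). *)
Definition o11 (k : nat) : 'I_11 := inord k.
(* with mathcomp's convention (s * t) x = t (s x),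
   tperm c0 c1 * tperm c0 c2 * ... * tperm c0 cm is the cycle (c0 c1 ... cm) *)
Definition cyc (c0 : 'I_11) (cs : seq 'I_11) : {perm 'I_11} :=
  foldl (fun s c => s * tperm c0 c) 1 cs.
Definition M11_a : {perm 'I_11} :=
  cyc (o11 0) [seq o11 k | k <- iota 1 10].
Definition M11_b : {perm 'I_11} :=
  cyc (o11 2) [:: o11 6; o11 10; o11 7] * cyc (o11 3) [:: o11 9; o11 4; o11 5].
Definition M11 : {set {perm 'I_11}} := <<[set M11_a; M11_b]>>.

Definition SL2 (p : nat) : {set {'GL_2(p)}} :=
  [set g : {'GL_2(p)} | (\det (GLval g) == 1)%R].
Definition PSL2 (p : nat) := SL2 p / 'Z(SL2 p).
Definition PGL2 (p : nat) := 'GL_2(p) / 'Z('GL_2(p)).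

Definition mersenne_prime (p : nat) := prime p /\ exists k, p = 2 ^ k - 1.

Definition prod_distinct_primes (n : nat) : nat := \prod_(q <- primes n) q.

(* Main.v *)
Require Import Defs.
From mathcomp Require Import all_boot all_order all_algebra all_fingroup all_solvable.
From mathcomp Require Import all_field.
From mathcomp Require Import ring zify.
Set Implicit Arguments. Unset Strict Implicit. Unset Printing Implicit Defensive.
Import GRing.Theory.

Section Part0.
Local Open Scope ring_scope.

Definition mx22 (F : fieldType) (a b c d : F) : 'M[F]_2 :=
  \matrix_(i < 2, j < 2) if (i : nat) == 0%N then (if (j : nat) == 0%N then a else b)
                          else (if (j : nat) == 0%N then c else d).

Lemma mx22_eta (F : fieldType) (A : 'M[F]_2) : A = mx22 (A 0 0) (A 0 1) (A 1 0) (A 1 1).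
Proof.
apply/matrixP => i j; rewrite !mxE.
case: i => [[|[|i]] Hi] //; case: j => [[|[|j]] Hj] //=; congr (A _ _); exact: val_inj.
Qed.

Lemma mx22_mul (F : fieldType) (a b c d a' b' c' d' : F) :
  mx22 a b c d *m mx22 a' b' c' d' =
  mx22 (a * a' + b * c') (a * b' + b * d') (c * a' + d * c') (c * b' + d * d').
Proof.
apply/matrixP => i j; rewrite !mxE !big_ord_recl big_ord0 !mxE /=.
case: i => [[|[|i]] Hi] //; case: j => [[|[|j]] Hj] //=; by rewrite addr0.
Qed.

Lemma mx22_det (F : fieldType) (a b c d : F) : \det (mx22 a b c d) = a * d - b * c.
Proof.
rewrite (expand_det_row _ 0) !big_ord_recl big_ord0 /cofactor !mxE /=.
rewrite !det_mx11 !mxE /=.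
by rewrite /bump /= expr0 expr1; ring.
Qed.

Lemma mx22_inj (F : fieldType) (a b c d a' b' c' d' : F) :
  mx22 a b c d = mx22 a' b' c' d' -> [/\ a = a', b = b', c = c' & d = d'].
Proof.
move=> E; have := congr1 (fun M : 'M[F]_2 => (M 0 0, M 0 1, M 1 0, M 1 1)) E.
by rewrite !mxE /= => -[].
Qed.

Lemma mx22_scalar (F : fieldType) (k : F) : k%:M = mx22 k 0 0 k :> 'M[F]_2.
Proof.
apply/matrixP => i j; rewrite !mxE.
case: i => [[|[|i]] Hi] //; case: j => [[|[|j]] Hj] //=.
Qed.

Local Open Scope group_scope.

Definition mkGL (F : finFieldType) (A : 'M[F]_2) : {'GL_2[F]} := insubd (1%g : {'GL_2[F]}) A.

Lemma mkGLE (F : finFieldType) (A : 'M[F]_2) : \det A != 0 -> GLval (mkGL A) = A.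
Proof. by move=> H; rewrite /mkGL val_insubd unitmxE unitfE H. Qed.

Lemma GL_inj (F : finFieldType) : injective (@GLval 2 F).
Proof. exact: val_inj. Qed.

Definition uu (F : finFieldType) (t : F) := locked (mkGL (mx22 1 t 0 1)).

Lemma uuE (F : finFieldType) (t : F) : GLval (uu t) = mx22 1 t 0 1.
Proof. by rewrite /uu -lock mkGLE // mx22_det mulr1 mulr0 subr0 oner_neq0. Qed.

Lemma uuM (F : finFieldType) (s t : F) : uu s * uu t = uu (s + t).
Proof. by apply: GL_inj; rewrite GL_MxE !uuE mx22_mul; congr mx22; ring. Qed.

Lemma uu0 (F : finFieldType) : uu (0 : F) = 1.
Proof. by apply: GL_inj; rewrite uuE GL_1E -mx22_scalar. Qed.

Lemma uuX (F : finFieldType) n : (uu (1%R : F)) ^+ n = uu (n%:R)%R.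
Proof.
elim: n => [|n IH]; first by rewrite expg0 uu0.
by rewrite expgS IH uuM -natr1 addrC.
Qed.

End Part0.

Section Part1.
Local Open Scope group_scope.

Lemma rho1 (F : finFieldType) (D : {group {'GL_2[F]}}) (aT : finGroupType) (rho : {'GL_2[F]} -> aT) :
  {in D &, {morph rho : x y / x * y}} -> rho 1 = 1.
Proof.
move=> hM; apply: (@mulgI _ (rho 1)); rewrite -hM ?group1 // !mulg1 //.
Qed.

Lemma rhoX (F : finFieldType) (D : {group {'GL_2[F]}}) (aT : finGroupType) (rho : {'GL_2[F]} -> aT) :
  {in D &, {morph rho : x y / x * y}} -> forall x n, x \in D -> rho (x ^+ n) = rho x ^+ n.
Proof.
move=> hM x n xD; elim: n => [|n IH]; first by rewrite !expg0 (rho1 hM).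
by rewrite !expgS hM ?groupX // IH.
Qed.

Lemma nbr_orbit (T : finType) (e : rel T) (G : {group {perm T}}) v w :
  is_aut_group e G -> arc_transitive e G -> e v w ->
  orbit 'P 'C_G[v | 'P] w = [set y | e v y].
Proof.
move=> aut arc evw; apply/setP => y; rewrite inE; apply/orbitP/idP.
- case=> g; rewrite inE => /andP[gG /astab1P]; rewrite /= !apermE => gv <-.
  by rewrite -{1}gv aut.
- move=> evy; have [g gG [gv gw]] := arc _ _ _ _ evw evy.
  exists g; last by rewrite /= apermE.
  by rewrite inE gG; apply/astab1P; rewrite /= apermE.
Qed.

Lemma core (F : finFieldType) (p : nat) (T : finType) (e : rel T) (G : {group {perm T}})
  (D : {group {'GL_2[F]}}) (rho : {'GL_2[F]} -> {perm T}) :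
  prime p -> regular_of_valency e p -> is_aut_group e G -> arc_transitive e G ->
  {in D &, {morph rho : x y / x * y}} ->
  {in D, forall g, rho g \in G} ->
  (forall t, uu t \in D) ->
  ~~ (p * p %| #|G|)%N ->
  rho (uu 1%R) != 1 ->
  (p%:R : F)%R = 0%R ->
  forall v g, (forall t, rho (uu t) v = v) -> g \in D -> (\det (GLval g) = 1)%R ->
  e v (rho g v) -> has_triangle e.
Proof.
move=> pr reg aut arc hM hG hU np2 pi1 charp v g fixv gD detg evw.
set w := rho g v in evw.
have autE : forall h x y, h \in D -> e (rho h x) (rho h y) = e x y.
  by move=> h x y hD; rewrite aut // hG.
have [a [b [c [d gE]]]] : exists a b c d, GLval g = mx22 a b c d.
  by exists (GLval g 0%R 0%R), (GLval g 0%R 1%R), (GLval g 1%R 0%R), (GLval g 1%R 1%R); exact: mx22_eta.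
move: detg; rewrite gE mx22_det => detg.
have [c0|cn0] := eqVneq c 0%R.
-
  exfalso; move/negP: np2; apply.
  have dn0 : d != 0%R.
    by apply/eqP => d0; move: detg; rewrite d0 c0 !mulr0 subr0 => /esym/eqP; rewrite oner_eq0.
  have key : g * uu 1%R = uu (a / d)%R * g.
    by apply: GL_inj; rewrite !GL_MxE !uuE gE !mx22_mul c0; congr mx22; field.
  set pi := rho (uu 1%R).
  have piw : pi w = w.
    by rewrite /w /pi -permM -hM // key hM // permM fixv.
  set Gv := 'C_G[v | 'P].
  have piGv : pi \in Gv by rewrite inE hG //; apply/astab1P; rewrite /= apermE fixv.
  have piGvw : pi \in 'C_Gv[w | 'P] by rewrite inE piGv; apply/astab1P; rewrite /= apermE.
  have opi : #[pi] = p.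
    apply/eqP; rewrite eqn_dvd; apply/andP; split.
      by rewrite order_dvdn /pi -(rhoX hM) // uuX charp uu0 (rho1 hM).
    have : (#[pi] %| p)%N by rewrite order_dvdn /pi -(rhoX hM) // uuX charp uu0 (rho1 hM).
    by move/(prime_nt_dvdP pr); rewrite order_eq1 => /(_ pi1) ->.
  have orb := card_orbit 'P Gv w.
  rewrite (nbr_orbit aut arc evw) reg in orb.
  have sGvw : 'C_Gv[w | 'P] \subset Gv by apply: subsetIl.
  have := Lagrange sGvw; rewrite -orb => HL.
  have dv1 : (p %| #|'C_Gv[w | 'P]|)%N by rewrite -opi cardSg // cycle_subG.
  have dv2 : (#|Gv| %| #|G|)%N by rewrite cardSg // subsetIl.
  apply: dvdn_trans dv2; rewrite -HL; exact: dvdn_mul.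
- set x := (- c^-1)%R; set y1 := (c^-1)%R; set y2 := ((1 - a - d) / c)%R.
  have key : g * uu x = uu y1 * g * uu y2 * g.
    have bE : b = ((a * d - 1) / c)%R by rewrite -detg; field.
    by apply: GL_inj; rewrite !GL_MxE !uuE gE !mx22_mul bE; congr mx22;
      rewrite /x /y1 /y2; field.
  rewrite /has_triangle; exists v, w, (rho (uu x) w); apply/and3P; split => //.
  + rewrite /w -permM -hM // key !hM ?groupM // !permM fixv.
    rewrite autE // -{1}(fixv y2) autE //.
  + by rewrite -{1}(fixv x) autE.
Qed.

End Part1.

Section Part2.
Local Open Scope group_scope.

Lemma stab_dvd (p : nat) (T : finType) (e : rel T) (G : {group {perm T}}) v0 :
  prime p -> regular_of_valency e p -> is_aut_group e G -> arc_transitive e G ->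
  (p %| #|'C_G[v0 | 'P]|)%N.
Proof.
move=> pr reg aut arc.
have : [set y | e v0 y] != set0 by rewrite -card_gt0 reg prime_gt0.
case/set0Pn => w0; rewrite inE => ev.
have := card_orbit 'P 'C_G[v0 | 'P] w0; rewrite (nbr_orbit aut arc ev) reg => ->.
exact: dvdn_indexg.
Qed.

Lemma find_v (p : nat) (T : finType) (e : rel T) (G : {group {perm T}}) (pi : {perm T}) :
  prime p -> regular_of_valency e p -> is_aut_group e G -> arc_transitive e G ->
  ~~ (p * p %| #|G|)%N -> pi \in G -> #[pi] = p -> exists v, pi v = v.
Proof.
move=> pr reg aut arc np2 piG opi.
case: (pickP (@predT T)) => [v0 _|T0]; last first.
  have : pi = 1 by apply/permP => x; have := T0 x.
  by move=> pi1; move: opi; rewrite pi1 order1 => p1; move: pr; rewrite -p1.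
have [x xG ox] := Cauchy pr (stab_dvd v0 pr reg aut arc).
have sGvG : 'C_G[v0 | 'P] \subset G by apply: subsetIl.
have xG' : x \in G by apply: (subsetP sGvG).
have sylS : p.-Sylow(G) <[x]>.
  rewrite /pHall cycle_subG xG' /pgroup -orderE ox pnat_id //=.
  rewrite p'natE //; apply/negP => pd; move/negP: np2; apply.
  rewrite -(Lagrange (_ : <[x]> \subset G)) ?cycle_subG // -orderE ox.
  by rewrite dvdn_pmul2l ?prime_gt0.
have [y yG sub] : exists2 y, y \in G & <[pi]> \subset <[x]> :^ y.
  apply: Sylow_subJ sylS _ _; first by rewrite cycle_subG.
  by rewrite /pgroup -orderE opi pnat_id.
move: sub; rewrite cycle_subG mem_conjg => /(subsetP (_ : <[x]> \subset 'C_G[v0 | 'P])).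
rewrite cycle_subG => /(_ xG); rewrite inE => /andP[_ /astab1P]; rewrite /= apermE.
rewrite conjgE invgK !permM => h.
by exists (y v0); rewrite -{2}h permKV.
Qed.

End Part2.

Section Part3.
Local Open Scope group_scope.

Lemma order_pi (F : finFieldType) (p : nat) (T : finType)
  (D : {group {'GL_2[F]}}) (rho : {'GL_2[F]} -> {perm T}) :
  prime p -> {in D &, {morph rho : x y / x * y}} -> (forall t, uu t \in D) ->
  rho (uu 1%R) != 1 -> (p%:R : F)%R = 0%R -> #[rho (uu 1%R)] = p.
Proof.
move=> pr hM hU pi1 charp.
have : (#[rho (uu 1%R)] %| p)%N by rewrite order_dvdn -(rhoX hM) // uuX charp uu0 (rho1 hM).
by move/(prime_nt_dvdP pr); rewrite order_eq1 => /(_ pi1) ->.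
Qed.

Lemma assemble (F : finFieldType) (p : nat) (T : finType) (e : rel T) (G : {group {perm T}})
  (D : {group {'GL_2[F]}}) (rho : {'GL_2[F]} -> {perm T}) :
  prime p -> symmetric e -> regular_of_valency e p -> is_aut_group e G -> arc_transitive e G ->
  {in D &, {morph rho : x y / x * y}} ->
  {in D, forall g, rho g \in G} ->
  (forall gam, gam \in G -> exists2 g, g \in D & rho g = gam) ->
  (forall t, uu t \in D) ->
  ~~ (p * p %| #|G|)%N ->
  rho (uu 1%R) != 1 ->
  (p%:R : F)%R = 0%R ->
  (forall t : F, exists n, t = (n%:R)%R) ->
  (forall v g, rho (uu 1%R) v = v -> g \in D ->
     exists2 g', g' \in D & (\det (GLval g') = 1)%R /\ rho g' v = rho g v) ->
  has_triangle e.
Proof.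
move=> pr sym reg aut arc hM hG surj hU np2 pi1 charp Fn norm.
have opi := order_pi pr hM hU pi1 charp.
have [v piv] := find_v pr reg aut arc np2 (hG _ (hU _)) opi.
have fixv : forall t, rho (uu t) v = v.
  move=> t; have [n ->] := Fn t; rewrite -uuX (rhoX hM) //.
  by elim: n => [|n IH]; rewrite ?expg0 ?perm1 // expgSr permM IH piv.
have : [set y | e v y] != set0 by rewrite -card_gt0 reg prime_gt0.
case/set0Pn => w; rewrite inE => evw.
have ewv : e w v by rewrite sym.
have [gam gamG [gv gw]] := arc _ _ _ _ evw ewv.
have [g gD rg] := surj _ gamG.
have [g' g'D [dg' rg']] := norm v g piv gD.
apply: (core pr reg aut arc hM hG hU np2 pi1 charp fixv g'D dg').
by rewrite rg' rg gv.
Qed.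

End Part3.

Section Part4.
Local Open Scope group_scope.

Lemma np2_GL p : prime p -> ~~ (p * p %| p * p.-1 ^ 2 * p.+1)%N.
Proof.
move=> pr; rewrite -mulnA dvdn_pmul2l ?prime_gt0 // Euclid_dvdM // Euclid_dvdX //.
have p1 := prime_gt1 pr.
have h1 : ~~ (p %| p.-1)%N by rewrite gtnNdvd // -?subn1 ?subn_gt0 // ?ltn_subrL; case: p p1 {pr}.
apply/negP => /orP[/andP[H _]|]; first by rewrite H in h1.
by rewrite -addn1 dvdn_addr // dvdn1 => /eqP p1'; move: p1; rewrite p1'.
Qed.

Lemma SL2_gs p : group_set (SL2 p).
Proof.
apply/group_setP; split; first by rewrite inE GL_1E det1.
by move=> x y; rewrite !inE GL_ME det_mulmx => /eqP-> /eqP->; rewrite GRing.mulr1.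
Qed.

Lemma l1_not_central p (x : {'GL_2['F_p]}) :
  (GLval x = mx22 1 1 0 1)%R ->
  x \in 'Z(Group (SL2_gs p)) -> False.
Proof.
move=> xE /(subsetP (subsetIr _ _)) /centP cx.
pose l := mkGL (mx22 (1%R : 'F_p) 0 1 1).
have lE : GLval l = mx22 1 0 1 1 by rewrite mkGLE // mx22_det; rewrite !(GRing.mulr1, GRing.mulr0, GRing.subr0) GRing.oner_neq0.
have lS : l \in Group (SL2_gs p) by rewrite inE lE mx22_det !(GRing.mulr1, GRing.mulr0, GRing.subr0).
have := cx _ lS; move/(congr1 (@GLval 2 _)); rewrite !GL_MxE xE lE !mx22_mul.
case/mx22_inj => + _ _ _; rewrite !(GRing.mulr1, GRing.mulr0, GRing.addr0, GRing.mul1r, GRing.mul0r, GRing.add0r).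
by move/eqP; rewrite -GRing.subr_eq0 GRing.addrK GRing.oner_eq0.
Qed.

Lemma quot_rep (F : finFieldType) (T : finType) (G : {group {perm T}}) (D : {group {'GL_2[F]}}) :
  G \isog (D / 'Z(D)) ->
  exists rho : {'GL_2[F]} -> {perm T},
    [/\ {in D &, {morph rho : x y / x * y}}, {in D, forall g, rho g \in G},
         (forall gam, gam \in G -> exists2 g, g \in D & rho g = gam),
         #|G| = #|D : 'Z(D)| & forall h, h \in D -> (rho h == 1) = (h \in 'Z(D))].
Proof.
move=> iso.
have nZ : D \subset 'N('Z(D)) := normal_norm (center_normal D).
have [f injf fG] : exists2 f : {morphism G >-> coset_of 'Z(D)}, 'injm f & f @* G = (D / 'Z(D))%G.
  by apply/isogP.
pose rho g := invm injf (coset 'Z(D) g).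
have memq : forall g, g \in D -> coset 'Z(D) g \in f @* G.
  by move=> g gS; rewrite fG mem_quotient.
exists rho; split.
- move=> x y xS yS; rewrite /rho morphM ?(subsetP nZ) // morphM //; exact: memq.
- move=> g gS; rewrite /rho; have := memq g gS; case/morphimP => x _ xG ->; by rewrite invmE.
- move=> gam gamG; have := mem_morphim f gamG gamG; rewrite fG.
  case/morphimP => x xN xS fx; exists x => //; by rewrite /rho -fx invmE.
- by rewrite -(card_injm injf (subxx _)) fG card_quotient.
- move=> h hD; apply/eqP/idP => [r1|hZ].
    have : coset 'Z(D) h = 1.
      by rewrite -(invmK injf (memq _ hD)); rewrite -/(rho _) r1 morph1.
    exact: (coset_idr (subsetP nZ _ hD)).
  by rewrite /rho coset_id // morph1.
Qed.

Lemma psl_case p (T : finType) (e : rel T) (G : {group {perm T}}) :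
  prime p -> symmetric e -> regular_of_valency e p -> is_aut_group e G ->
  arc_transitive e G -> G \isog PSL2 p -> has_triangle e.
Proof.
move=> pr sym reg aut arc iso.
set SLG := Group (SL2_gs p).
have [rho [hM hG surj cardG ker]] := @quot_rep _ _ G SLG iso.
have u1S : uu (1%R : 'F_p) \in SLG.
  by rewrite inE uuE mx22_det !(GRing.mulr1, GRing.mulr0, GRing.subr0).
apply: (@assemble _ p T e G SLG rho pr sym reg aut arc hM hG surj).
- move=> t; rewrite inE uuE mx22_det.
  by rewrite !(GRing.mulr1, GRing.mulr0, GRing.subr0).
- rewrite cardG.
  apply: contra (np2_GL pr) => H; apply: dvdn_trans H _.
  have -> : (p * p.-1 ^ 2 * p.+1)%N = #|'GL_2['F_p]| by rewrite card_GL_2 card_Fp.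
  apply: dvdn_trans (dvdn_indexg _ _) _.
  by apply: cardSg; apply: subsetT.
- rewrite ker //; apply/negP.
  by apply: l1_not_central; rewrite uuE.
- exact: pchar_Fp_0.
- by move=> t; exists (nat_of_ord t); rewrite natr_Zp.
- by move=> v g _ gS; exists g => //; split => //; move: gS; rewrite inE => /eqP.
Qed.

End Part4.

Section Part5.
Local Open Scope ring_scope.

Lemma sq_even (F : fieldType) (x : F) j : ~~ odd j -> exists e : F, x ^+ j = e ^+ 2.
Proof.
move=> ej; exists (x ^+ j./2); rewrite -exprM muln2.
by have := odd_double_half j; rewrite (negbTE ej) add0n => ->.
Qed.

Lemma mersenne_m p : mersenne_prime p -> odd ((p - 1) %/ 2) /\ ((p - 1) %/ 2 * 2 = p - 1)%N.
Proof.
case=> pr [n pE].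
case: n pE => [|[|n]] pE; first by rewrite pE in pr.
  by rewrite pE in pr.
have X1 : (0 < 2 ^ n.+1)%N by rewrite expn_gt0.
have -> : (p - 1 = (2 ^ n.+1 - 1) * 2)%N.
  rewrite pE expnS; move: X1; set X := (2 ^ n.+1)%N; lia.
rewrite mulnK //; split => //.
by rewrite oddB ?expn_gt0 // oddX.
Qed.

Lemma sq_class p : mersenne_prime p -> forall d : 'F_p, d != 0 ->
  exists e : 'F_p, d = e ^+ 2 \/ - d = e ^+ 2.
Proof.
move=> mp d dn0; have [om m2] := mersenne_m mp.
have pr : prime p by case: mp.
set m := ((p - 1) %/ 2)%N in om m2.
have [gam gE] := cyclicP (field_unit_group_cyclic [set: {unit 'F_p}]%G).
have og : #[gam]%g = (p - 1)%N by rewrite orderE -gE card_finField_unit card_Fp // subn1.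
pose u := insubd (1%g : {unit 'F_p}) d.
have uE : FinRing.uval u = d by rewrite /u val_insubd unitfE dn0.
have : u \in <[gam]>%g by rewrite -gE inE.
case/cycleP => k uk.
have dE : d = FinRing.uval gam ^+ k by rewrite -uE uk FinRing.val_unitX.
have w1 : FinRing.uval gam ^+ m = -1.
  have : (FinRing.uval gam ^+ m) ^+ 2 == 1.
    by rewrite -exprM -FinRing.val_unitX muln2 -mul2n mulnC m2 -og expg_order.
  rewrite sqrf_eq1 => /orP[/eqP h|/eqP //].
  exfalso; have : (gam ^+ m)%g = 1%g by apply: val_inj; rewrite /= FinRing.val_unitX h.
  move=> gm1; have p1 := prime_gt1 pr.
  have m0 : (0 < m)%N by move: m2 p1; clearbody m; lia.
  have := @order_inf _ gam m.-1; rewrite prednK // gm1 eqxx og => /(_ isT).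
  by move: m2 p1 m0; clearbody m; lia.
have [ok|ek] := boolP (odd k).
- have emk : ~~ odd (m + k) by rewrite oddD om ok.
  have [e ee] := sq_even (FinRing.uval gam) emk.
  by exists e; right; rewrite dE -ee exprD w1 mulN1r.
- have [e ee] := sq_even (FinRing.uval gam) ek.
  by exists e; left; rewrite dE.
Qed.

End Part5.

Section Part6.
Local Open Scope group_scope.

Definition ll (F : finFieldType) := locked (mkGL (mx22 (1%R : F) 0 1 1)).
Lemma llE (F : finFieldType) : GLval (ll F) = mx22 1 0 1 1.
Proof. by rewrite /ll -lock mkGLE // mx22_det !(mulr1, mulr0, subr0) oner_neq0. Qed.

Definition sc (F : finFieldType) (a : F) := locked (mkGL (mx22 a 0 0 a)).
Lemma scE (F : finFieldType) (a : F) : a != 0%R -> GLval (sc a) = mx22 a 0 0 a.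
Proof. by move=> an0; rewrite /sc -lock mkGLE // mx22_det mulr0 subr0 mulf_neq0. Qed.

Lemma addr_l0 (F : zmodType) (x y : F) : (x + y = x)%R -> y = 0%R.
Proof. by move=> h; apply: (@addrI _ x); rewrite addr0. Qed.

Lemma central_scalar (F : finFieldType) (D : {group {'GL_2[F]}}) h :
  uu 1%R \in D -> ll F \in D -> h \in 'Z(D) ->
  exists2 a : F, a != 0%R & h = sc a.
Proof.
move=> uD lD /(subsetP (subsetIr _ _)) /centP ch.
have [a [b [c [d hE]]]] : exists a b c d, GLval h = mx22 a b c d.
  by exists (GLval h 0%R 0%R), (GLval h 0%R 1%R), (GLval h 1%R 0%R), (GLval h 1%R 1%R); exact: mx22_eta.
have := ch _ uD; move/(congr1 (@GLval 2 _)); rewrite !GL_MxE hE uuE !mx22_mul.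
case/mx22_inj => e1 e2 _ _.
have := ch _ lD. move/(congr1 (@GLval 2 _)). rewrite !GL_MxE hE. rewrite llE. rewrite !mx22_mul.
case/mx22_inj => e3 _ _ _.
move: e1 e2 e3; rewrite !(mulr1, mulr0, addr0, mul1r, mul0r, add0r) => e1 e2 e3.
have c0 : c = 0%R by apply: (@addr_l0 _ a); rewrite -e1.
have b0 : b = 0%R by apply: (@addr_l0 _ a).
have ad : d = a.
  by move: e2; rewrite b0 addr0 add0r => ->.
have an0 : a != 0%R.
  apply/eqP => a0; have := GL_det h; rewrite hE mx22_det ad a0 c0 !mulr0 subrr eqxx //.
exists a => //; apply: GL_inj; by rewrite hE scE // b0 c0 ad.
Qed.

Lemma sc_central (F : finFieldType) (a : F) : a != 0%R -> sc a \in 'Z([set: {'GL_2[F]}]).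
Proof.
move=> an0; rewrite inE inE /=; apply/centP => y _.
apply: GL_inj; rewrite !GL_MxE scE // -mx22_scalar.
by rewrite scalar_mxC.
Qed.

Lemma card_Z (F : finFieldType) : #|'Z([set: {'GL_2[F]}])| = #|F|.-1.
Proof.
have -> : 'Z([set: {'GL_2[F]}]) = [set sc a | a in [set~ (0%R : F)]].
  apply/setP => h; apply/idP/imsetP.
    move=> hZ; have [a an0 ->] := central_scalar (in_setT _) (in_setT _) hZ.
    by exists a => //; rewrite !inE.
  by case=> a; rewrite in_setC1 => an0 ->; apply: (sc_central an0).
rewrite card_in_imset ?cardsC1 // => a b; rewrite !inE => an0 bn0 /(congr1 (@GLval 2 _)).
by rewrite !scE // => /mx22_inj[].
Qed.

Lemma b_upper (F : fieldType) (a b c d lam k : F) :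
  (mx22 1 1 0 1 *m mx22 a b c d = mx22 a b c d *m (mx22 lam 0 0 lam *m mx22 1 k 0 1))%R -> c = 0%R.
Proof.
rewrite !mx22_mul; case/mx22_inj => e1 _ e3 _.
move: e1 e3; rewrite !(mulr1, mulr0, addr0, mul1r, mul0r, add0r) => e1 e3.
have [//|cn0] := eqVneq c 0%R.
have l1 : lam = 1%R by apply: (mulIf cn0); rewrite mul1r mulrC -e3.
by move: e1; rewrite l1 mulr1; apply: addr_l0.
Qed.

Lemma b_invol (F : fieldType) (a b d lam : F) :
  (mx22 a b 0 d *m mx22 a b 0 d = mx22 lam 0 0 lam)%R -> (b = 0%R /\ a = d) \/ d = (- a)%R.
Proof.
rewrite !mx22_mul; case/mx22_inj => e1 e2 _ e4.
move: e1 e2 e4; rewrite !(mulr1, mulr0, addr0, mul1r, mul0r, add0r) => e1 e2 e4.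
have [ad0|adn0] := eqVneq (a + d)%R 0%R.
  by right; apply/eqP; rewrite -subr_eq0 opprK addrC ad0.
left; have b0 : b = 0%R.
  by apply: (mulIf adn0); rewrite mul0r -e2; ring.
split => //; have : ((a - d) * (a + d) = 0)%R.
  by rewrite (_ : ((a - d) * (a + d) = a * a - d * d)%R); [rewrite e1 e4 subrr | ring].
by move/eqP; rewrite mulf_eq0 (negbTE adn0) orbF subr_eq0 => /eqP.
Qed.

Lemma rhoV (F : finFieldType) (D : {group {'GL_2[F]}}) (aT : finGroupType) (rho : {'GL_2[F]} -> aT) :
  {in D &, {morph rho : x y / x * y}} -> forall x, x \in D -> rho x^-1 = (rho x)^-1.
Proof.
move=> hM x xD; apply: (@mulIg _ (rho x)); rewrite -hM ?groupV // mulVg mulVg.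
exact: rho1 hM.
Qed.

Lemma pgl_gen (F : finFieldType) p (T : finType) (e : rel T) (G : {group {perm T}}) (s : nat) :
  prime p -> mersenne_prime p -> #|F| = p -> (p%:R : F)%R = 0%R ->
  (forall t : F, exists n, t = (n%:R)%R) ->
  (forall d : F, d != 0%R -> exists e : F, d = (e ^+ 2)%R \/ (- d)%R = (e ^+ 2)%R) ->
  symmetric e -> regular_of_valency e p -> is_aut_group e G ->
  arc_transitive e G -> (s %| (p - 1) %/ 2)%N -> (s < (p - 1) %/ 2)%N ->
  #|T| = ((p ^ 2 - 1) %/ (2 * s))%N -> G \isog ('GL_2[F] / 'Z('GL_2[F])) -> has_triangle e.
Proof.
move=> pr mp cardF charp Fn sqc sym reg aut arc sdiv slt Tcard iso.
have [rho [hM hG surj cardG ker]] := @quot_rep _ _ G 'GL_2[F]%G iso.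
have [om m2] := mersenne_m mp.
move: sdiv slt m2; set m := ((p - 1) %/ 2)%N => sdiv slt m2.
have p1 := prime_gt1 pr.
have s0 : (0 < s)%N.
  by rewrite lt0n; apply/eqP => s0; move: sdiv slt; rewrite s0 dvd0n => /eqP ->.
have s2p : (2 * s < p)%N by move: slt m2; clearbody m; lia.
have [j mj] : exists j, m = (s * j)%N by case/dvdnP: sdiv => j ->; exists j; rewrite mulnC.
have TE : (#|T| * (2 * s) = p ^ 2 - 1)%N.
  rewrite Tcard divnK //; apply/dvdnP; exists ((p + 1) * j)%N.
  move: m2; rewrite mj; clearbody m; move=> m2.
  have -> : (p ^ 2 - 1 = (p - 1) * (p + 1))%N by rewrite -{2}(exp1n 2) subn_sqr.
  rewrite -m2; ring.
have cardG' : (#|G| = p * (p ^ 2 - 1))%N.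
  have L := Lagrange (center_sub 'GL_2[F]%G).
  rewrite card_Z card_GL_2 cardF in L.
  rewrite cardG; apply/eqP; rewrite -(eqn_pmul2l (_ : 0 < p.-1)%N); last by rewrite -subn1 subn_gt0.
  have E : (p ^ 2 - 1 = p.-1 * p.+1)%N.
    by rewrite -subn1 -(addn1 p) -(subn_sqr p 1) exp1n.
  by rewrite L E; apply/eqP; ring.
have u1D : uu (1%R : F) \in 'GL_2[F]%G by rewrite inE.
have pi1 : rho (uu 1%R) != 1.
  rewrite ker //; apply/negP => /(central_scalar u1D (in_setT _)) [a an0].
  move/(congr1 (@GLval 2 _)); rewrite uuE scE // => /mx22_inj[_ /esym /eqP].
  by rewrite eq_sym oner_eq0.
apply: (@assemble _ p T e G _ rho pr sym reg aut arc hM hG surj).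
- by move=> t; rewrite inE.
- rewrite cardG.
  apply: contra (np2_GL pr) => H; apply: dvdn_trans H _.
  have -> : (p * p.-1 ^ 2 * p.+1)%N = #|'GL_2[F]| by rewrite card_GL_2 cardF.
  exact: dvdn_indexg.
- exact: pi1.
- exact: charp.
- exact: Fn.
move=> v g piv _.
set pi := rho (uu 1%R) in piv pi1.
have opi : #[pi] = p := order_pi pr hM (fun t => in_setT _) pi1 charp.
set Gv := 'C_G[v | 'P].
have nb : forall x, exists y, e x y.
  move=> x; have : [set y | e x y] != set0 by rewrite -card_gt0 reg prime_gt0.
  by case/set0Pn => y; rewrite inE => exy; exists y.
have orbT : orbit 'P G v = [set: T].
  apply/setP => y; rewrite inE; apply/orbitP.
  have [w evw] := nb v; have [y' eyy'] := nb y.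
  have [h hG' [hv _]] := arc _ _ _ _ evw eyy'.
  by exists h => //; rewrite /= apermE.
have idx : #|G : Gv| = #|T| by rewrite -card_orbit orbT cardsT.
have Tpos : (0 < #|T|)%N by apply/card_gt0P; exists v.
have cGv : #|Gv| = (2 * s * p)%N.
  have L := Lagrange (subsetIl G 'C[v | 'P]).
  rewrite idx cardG' -TE in L.
  by apply/eqP; rewrite -(eqn_pmul2r Tpos) L; apply/eqP; ring.
have [iota iGv oi] : {x | x \in Gv & #[x] = 2}.
  by apply: Cauchy => //; rewrite cGv -mulnA dvdn_mulr.
have iG : iota \in G by move: iGv => /setIP[].
have iv : iota v = v by move: iGv => /setIP[_ /astab1P]; rewrite /= apermE.
set P := <[pi]>.
have piGv : pi \in Gv.
  by apply/setIP; split; [exact: hG (in_setT _) | apply/astab1P; rewrite /= apermE].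
have PGv : P \subset Gv by rewrite cycle_subG.
have iPP : #|Gv : P| = (2 * s)%N.
  have L := Lagrange PGv; rewrite cGv -orderE opi in L.
  by apply/eqP; rewrite -(eqn_pmul2l (prime_gt0 pr)) L mulnC.
have sylP : p.-Sylow(Gv) P.
  rewrite /pHall PGv /pgroup -orderE opi pnat_id //= p'natE // iPP.
  by rewrite gtnNdvd // muln_gt0 s0.
have nP : Gv \subset 'N(P).
  have c1 := card_Syl sylP; have c2 := card_Syl_mod Gv pr.
  rewrite c1 in c2.
  have sPN : P \subset 'N_Gv(P) by rewrite subsetI PGv normG.
  have LI := Lagrange_index (subsetIl Gv 'N(P)) sPN.
  rewrite iPP in LI.
  have n1 : #|Gv : 'N_Gv(P)| = 1%N.
    have nle : (#|Gv : 'N_Gv(P)| <= 2 * s)%N.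
      by rewrite -LI leq_pmulr // indexg_gt0.
    by rewrite modn_small in c2 => //; apply: leq_ltn_trans nle s2p.
  by move/eqP: n1; rewrite indexg_eq1 subsetI subxx.
have iN : iota \in 'N(P) by apply: (subsetP nP).
have [b _ rb] := surj iota iG.
have : pi ^ iota \in P by rewrite memJ_norm // cycle_id.
case/cycleP => k pik.
pose z := b^-1 * uu 1%R * b * (uu 1%R ^+ k)^-1.
have rz : rho z = 1.
  rewrite /z !hM ?inE // (rhoV hM) ?inE // (rhoV hM) ?inE // (rhoX hM) ?inE //.
  by rewrite -/pi rb -(mulgA _ pi) -conjgE pik mulgV.
have zZ : z \in 'Z('GL_2[F]%G) by rewrite -ker ?inE // rz.
have [lam lam0 zE] := central_scalar u1D (in_setT _) zZ.
have key : uu 1%R * b = b * (sc lam * uu (k%:R)%R).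
  by rewrite -zE -uuX /z mulgVK -!mulgA mulVKg.
have [a [be [c [d bE]]]] : exists a0 b0 c0 d0, GLval b = mx22 a0 b0 c0 d0.
  by exists (GLval b 0%R 0%R), (GLval b 0%R 1%R), (GLval b 1%R 0%R), (GLval b 1%R 1%R); exact: mx22_eta.
have c0 : c = 0%R.
  apply: (@b_upper _ a be c d lam (k%:R)%R).
  rewrite -bE -(uuE 1%R) -(scE lam0) -(uuE (k%:R)%R).
  by have := congr1 (@GLval 2 _) key; rewrite !GL_MxE.
have bD : b \in 'GL_2[F]%G by rewrite inE.
have rsc : forall x : F, x != 0%R -> rho (sc x) = 1.
  by move=> x xn0; apply/eqP; rewrite ker; [exact: sc_central | exact: in_setT].
have rbb : rho (b * b) = 1.
  by rewrite hM // rb -{2}(expg1 iota) -expgS -oi expg_order.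
have bbZ : b * b \in 'Z('GL_2[F]%G) by rewrite -ker ?inE // rbb.
have [lam' lam'0 bbE] := central_scalar u1D (in_setT _) bbZ.
have an0 : a != 0%R.
  by apply/eqP => a0; have := GL_det b; rewrite bE mx22_det a0 c0 !mul0r mulr0 subrr eqxx.
have dE : d = (- a)%R.
  have := congr1 (@GLval 2 _) bbE; rewrite GL_MxE bE (scE lam'0) c0 => /b_invol.
  case=> // [[be0 ad]]; exfalso.
  have bsc : b = sc a by apply: GL_inj; rewrite bE (scE an0) be0 c0 ad.
  have : rho b = 1 by rewrite bsc rsc.
  by rewrite rb => i1; move: oi; rewrite i1 order1.
have detb : (\det (GLval b) = - a ^+ 2)%R.
  by rewrite bE mx22_det c0 dE mulr0 subr0 mulrN expr2.
have [eps epsE] := sqc _ (GL_det g).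
have epsn0 : eps != 0%R.
  apply/eqP => e0; have dn := GL_det g; move: epsE; rewrite e0 expr0n /= => -[h|h].
    by rewrite h eqxx in dn.
  by move: dn; rewrite -oppr_eq0 h eqxx.
case: epsE => epsE.
- have en : (eps^-1 != 0)%R by rewrite invr_eq0.
  exists (g * sc (eps^-1)%R)%g; first by rewrite inE.
  split; last by rewrite hM ?inE // (rsc _ en) mulg1.
  rewrite GL_MxE det_mulmx (scE en) mx22_det epsE mulr0 subr0; field; done.
- have ean : ((eps * a)^-1 != 0)%R by rewrite invr_eq0 mulf_neq0.
  exists (b * g * sc ((eps * a)^-1)%R)%g; first by rewrite inE.
  split; last by rewrite !hM ?inE // rsc // mulg1 permM rb iv.
  rewrite !GL_MxE !det_mulmx detb (scE ean) mx22_det mulr0 subr0.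
  have -> : (\det (GLval g) = - eps ^+ 2)%R by rewrite -epsE opprK.
  field; apply/andP; split; done.
Qed.

End Part6.


Lemma complete_tri (T : finType) (e : rel T) : is_complete_graph e 12 -> has_triangle e.
Proof.
case=> cT ce.
have u := enum_uniq T.
have sz : size (enum T) = 12 by rewrite -cardT.
move: u sz; case: (enum T) => [|x [|y [|z r]]] //= /andP[hx /andP[hy _]] _.
move: hx hy; rewrite !inE !negb_or => /andP[xy /andP[xz _]] /andP[yz _].
by exists x, y, z; rewrite !ce.
Qed.

Unset Implicit Arguments.

Theorem lemma3p3 (p : nat) (T : finType) (e : rel T) (G : {group {perm T}}) :
  prime p ->
  symmetric e -> irreflexive e ->
  connected_graph e ->
  regular_of_valency e p ->
  is_aut_group e G ->
  arc_transitive e G ->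
  quasiprimitive G \/ biquasiprimitive G ->
  (   (is_complete_graph e 12 /\ (G \isog M11) /\ p = 11)
   \/ (exists s : nat,
         mersenne_prime p /\
         (prod_distinct_primes ((p - 1) %/ 2) %| s)%N /\ (s %| (p - 1) %/ 2)%N /\ (s < (p - 1) %/ 2)%N /\
         #|T| = ((p ^ 2 - 1) %/ (2 * s))%N /\
         ((G \isog PSL2 p) \/ (G \isog PGL2 p)))) ->
  has_triangle e.
Proof.
move=> pr sym irr conn reg aut arc _ [[cg _]|[s [mp [_ [sdiv [slt [Tc [iso|iso]]]]]]]].
- exact: complete_tri.
- exact: (psl_case pr sym reg aut arc iso).
- apply: (@pgl_gen 'F_p p T e G s pr mp (card_Fp pr) (pchar_Fp_0 pr) _ (sq_class mp)
     sym reg aut arc sdiv slt Tc iso).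
  by move=> t; exists (nat_of_ord t); rewrite natr_Zp.
Qed.
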